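(* Let $\alpha=\ln2/\ln3$ and $t_i=\dfrac{2^{\lfloor (i-1)/\alpha\rfloor}}{3^i}$ for $i\ge1$. Then $$\lim_{m\to\infty}\frac1m\sum_{i=1}^m t_i=\frac1\alpha\int_1^{1+\alpha}3^{-x}\,dx=\frac{1}{6\ln2}.$$
   Context: The numbers $t_i$ are the terms of the (divergent) series $-\Phi_{\mathbb{R}}(1c_\alpha)$, where $1c_\alpha=(\lceil(j+1)\alpha\rceil-\lceil j\alpha\rceil)_{j\ge0}$ and $\Phi_{\mathbb{R}}(w)=-\sum_{i\ge0}2^{d_i}/3^{i+1}$ for a word with $1$'s at positions $d_0<d_1<\cdots$. *)

(* Defs.v *)
From Stdlib Require Import Reals.
From Coquelicot Require Import Coquelicot.
Open Scope R_scope.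

Definition alpha : R := ln 2 / ln 3.

(* floor of a real: Stdlib's Int_part x = up x - 1 is exactly floor x. *)
Definition Rfloor_Z (x : R) : Z := Int_part x.

Definition t (i : nat) : R :=
  powerRZ 2 (Rfloor_Z ((INR i - 1) / alpha)) / 3 ^ i.

Definition cesaro_t (m : nat) : R := / INR m * sum_n_m t 1 m.

(* Main.v *)
Require Import Defs.
From Stdlib Require Import Reals Lra Lia ZArith Classical.
From Coquelicot Require Import Coquelicot.
Open Scope R_scope.

Lemma ln2_pos : 0 < ln 2.
Proof. pose proof ln_lt_2; lra. Qed.
Lemma ln3_gt : ln 2 < ln 3.
Proof. apply ln_increasing; lra. Qed.

Definition beta := ln 3 / ln 2.
Definition fr (x : R) := x - IZR (Int_part x).
Definition a (k : nat) := fr (INR k * beta).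

Lemma beta_pos : 0 < beta.
Proof. pose proof ln2_pos; pose proof ln3_gt. unfold beta. apply Rdiv_lt_0_compat; lra. Qed.

Lemma fr_bounds x : 0 <= fr x < 1.
Proof. unfold fr. destruct (base_Int_part x). lra. Qed.

Lemma fr_char x r z : 0 <= r < 1 -> x = IZR z + r -> fr x = r.
Proof.
  intros Hr Hx. unfold fr, Int_part.
  rewrite <- (tech_up x (z + 1)).
  - replace (z + 1 - 1)%Z with z by ring. lra.
  - rewrite plus_IZR. lra.
  - rewrite plus_IZR. lra.
Qed.

Lemma fr_dec x : x = IZR (Int_part x) + fr x.
Proof. unfold fr. ring. Qed.

Lemma a_bounds k : 0 <= a k < 1.
Proof. apply fr_bounds. Qed.

Lemma a_add k m :
  (a k + a m < 1 /\ a (k + m) = a k + a m) \/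
  (1 <= a k + a m /\ a (k + m) = a k + a m - 1).
Proof.
  assert (E : INR (k + m) * beta =
     IZR (Int_part (INR k * beta)) + a k + (IZR (Int_part (INR m * beta)) + a m)).
  { unfold a, fr. rewrite plus_INR. ring. }
  pose proof (a_bounds k); pose proof (a_bounds m).
  destruct (Rlt_le_dec (a k + a m) 1).
  - left. split; auto. unfold a at 1. apply fr_char with
      (Int_part (INR k * beta) + Int_part (INR m * beta))%Z; [lra|].
    rewrite E, plus_IZR. ring.
  - right. split; auto. unfold a at 1. apply fr_char with
      (Int_part (INR k * beta) + Int_part (INR m * beta) + 1)%Z; [lra|].
    rewrite E, !plus_IZR. ring.
Qed.

Lemma a_sub i j : (i <= j)%nat ->
  (a i <= a j /\ a (j - i) = a j - a i) \/
  (a j < a i /\ a (j - i) = a j - a i + 1).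
Proof.
  intros Hij.
  assert (E : INR (j - i) * beta =
     IZR (Int_part (INR j * beta)) + a j - (IZR (Int_part (INR i * beta)) + a i)).
  { unfold a, fr. rewrite minus_INR by auto. ring. }
  pose proof (a_bounds i); pose proof (a_bounds j).
  destruct (Rle_lt_dec (a i) (a j)).
  - left. split; auto. unfold a at 1. apply fr_char with
      (Int_part (INR j * beta) - Int_part (INR i * beta))%Z; [lra|].
    rewrite E, minus_IZR. ring.
  - right. split; auto. unfold a at 1. apply fr_char with
      (Int_part (INR j * beta) - Int_part (INR i * beta) - 1)%Z; [lra|].
    rewrite E, !minus_IZR. ring.
Qed.

Lemma a_irr m : (1 <= m)%nat -> a m <> 0.
Proof.
  intros Hm H0.
  pose proof ln2_pos; pose proof ln3_gt.
  pose proof (fr_dec (INR m * beta)) as E. fold (a m) in E. rewrite H0, Rplus_0_r in E.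
  set (F := Int_part (INR m * beta)) in *.
  assert (Fpos : (0 < F)%Z).
  { apply lt_IZR. rewrite <- E. apply Rmult_lt_0_compat; [|apply beta_pos].
    apply lt_0_INR; lia. }
  assert (EF : IZR F = INR (Z.to_nat F)).
  { rewrite INR_IZR_INZ, Z2Nat.id; auto; lia. }
  rewrite EF in E.
  assert (L : ln (3 ^ m) = ln (2 ^ Z.to_nat F)).
  { rewrite !ln_pow by lra. rewrite <- E. unfold beta. field. lra. }
  apply ln_inv in L; try (apply pow_lt; lra).
  assert (N : (3 ^ m = 2 ^ Z.to_nat F)%nat).
  { apply INR_eq. rewrite !pow_INR. replace (INR 3) with 3 by (simpl; ring). replace (INR 2) with 2 by (simpl; ring). exact L. }
  assert (O1 : Nat.odd (3 ^ m) = true) by (rewrite Nat.odd_pow; [reflexivity|lia]).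
  assert (O2 : Nat.odd (2 ^ Z.to_nat F) = false) by (rewrite Nat.odd_pow; [reflexivity|lia]).
  rewrite N in O1. congruence.
Qed.

Lemma pigeon : forall N (f : nat -> nat), (forall k, (k <= N)%nat -> (f k < N)%nat) ->
  exists i j, (i < j <= N)%nat /\ f i = f j.
Proof.
  induction N as [|N IH]; intros f Hf.
  - specialize (Hf 0%nat (le_n 0)). lia.
  - destruct (classic (exists i, (i <= N)%nat /\ f i = f (S N))) as [[i [Hi Hfi]]|Hno].
    + exists i, (S N). split; [lia|auto].
    + set (g k := if Nat.eq_dec (f k) N then f (S N) else f k).
      assert (Hg : forall k, (k <= N)%nat -> (g k < N)%nat).
      { intros k Hk. unfold g. pose proof (Hf k ltac:(lia)). pose proof (Hf (S N) (le_n _)).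
        destruct (Nat.eq_dec (f k) N).
        - assert (f (S N) <> N). { intro. apply Hno. exists k. split; [lia|congruence]. }
          lia.
        - lia. }
      destruct (IH g Hg) as [i [j [Hij Hgij]]].
      exists i, j. split; [lia|].
      unfold g in Hgij.
      destruct (Nat.eq_dec (f i) N), (Nat.eq_dec (f j) N); try congruence.
      * exfalso. apply Hno. exists j. split; [lia|congruence].
      * exfalso. apply Hno. exists i. split; [lia|congruence].
Qed.

Lemma box_ok x N : 0 <= x < INR N ->
  (0 <= Int_part x)%Z /\ (Z.to_nat (Int_part x) < N)%nat.
Proof.
  intros [H1 H2]. destruct (base_Int_part x) as [B1 B2].
  assert (P : (0 <= Int_part x)%Z).
  { assert (-1 < IZR (Int_part x)) by lra.
    apply lt_IZR in H. lia. }
  split; auto.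
  apply INR_lt. rewrite INR_IZR_INZ, Z2Nat.id by auto. lra.
Qed.

Lemma dirichlet N : (1 <= N)%nat ->
  exists i j, (i < j <= N)%nat /\ Rabs (a j - a i) < / INR N.
Proof.
  intros HN.
  assert (NP : 0 < INR N) by (apply lt_0_INR; lia).
  set (f k := Z.to_nat (Int_part (INR N * a k))).
  assert (Hb : forall k, 0 <= INR N * a k < INR N).
  { intro k. pose proof (a_bounds k). split; [nra|].
    rewrite <- (Rmult_1_r (INR N)) at 2. apply Rmult_lt_compat_l; lra. }
  destruct (pigeon N f) as [i [j [Hij Hf]]].
  { intros k _. apply box_ok, Hb. }
  exists i, j. split; auto.
  unfold f in Hf.
  destruct (box_ok _ _ (Hb i)) as [Pi _]. destruct (box_ok _ _ (Hb j)) as [Pj _].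
  apply Z2Nat.inj in Hf; auto.
  destruct (base_Int_part (INR N * a i)) as [B1 B2].
  destruct (base_Int_part (INR N * a j)) as [C1 C2].
  rewrite Hf in B1, B2.
  assert (Hlt : Rabs (INR N * a j - INR N * a i) < 1).
  { apply Rabs_def1; lra. }
  rewrite <- Rmult_minus_distr_l, Rabs_mult, Rabs_pos_eq in Hlt by lra.
  apply (Rmult_lt_reg_l (INR N)); auto. rewrite Rinv_r by lra. exact Hlt.
Qed.

Lemma convert p : (1 <= p)%nat -> exists q, (1 <= q)%nat /\ a q < 1 - a p.
Proof.
  intros Hp.
  pose proof (a_bounds p) as Bp. pose proof (a_irr p Hp) as Ip.
  set (eta := 1 - a p).
  assert (He : 0 < eta <= 1) by (unfold eta; lra).
  set (K := Int_part (/ eta)).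
  destruct (base_Int_part (/ eta)) as [B1 B2]. fold K in B1, B2.
  assert (Hinv : 1 <= / eta).
  { rewrite <- Rinv_1. apply Rinv_le_contravar; lra. }
  assert (Kp : (1 <= K)%Z).
  { assert (0 < IZR K) by lra. apply lt_IZR in H. lia. }
  set (k := Z.to_nat K).
  assert (Ek : INR k = IZR K) by (unfold k; rewrite INR_IZR_INZ, Z2Nat.id by lia; auto).
  assert (k1 : (1 <= k)%nat) by (unfold k; lia).
  assert (Hk1 : INR k * eta <= 1).
  { rewrite Ek. apply (Rmult_le_reg_r (/ eta)). apply Rinv_0_lt_compat; lra.
    rewrite Rmult_assoc, Rinv_r, Rmult_1_r, Rmult_1_l by lra. lra. }
  assert (Hk2 : 1 < (INR k + 1) * eta).
  { rewrite Ek. apply (Rmult_lt_reg_r (/ eta)). apply Rinv_0_lt_compat; lra.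
    rewrite Rmult_assoc, Rinv_r, Rmult_1_r, Rmult_1_l by lra. lra. }
  assert (Hk0 : 0 < INR k * eta) by (apply Rmult_lt_0_compat; [apply lt_0_INR; lia|lra]).
  exists (k * p)%nat. split; [nia|].
  assert (A : a (k * p) = 1 - INR k * eta).
  { unfold a. apply fr_char with (Z.of_nat k * (Int_part (INR p * beta) + 1) - 1)%Z.
    - lra.
    - rewrite mult_INR, minus_IZR, mult_IZR, plus_IZR, <- INR_IZR_INZ.
      set (F := Int_part (INR p * beta)).
      assert (HF : INR p * beta = IZR F + a p) by (unfold a, fr, F; ring).
      rewrite Rmult_assoc, HF. unfold eta. ring. }
  rewrite A. fold eta. lra.
Qed.

Lemma small eps : 0 < eps -> exists m, (1 <= m)%nat /\ 0 < a m < eps.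
Proof.
  intros He.
  destruct (archimed (/ eps)) as [A1 _].
  set (N := S (Z.to_nat (up (/ eps)))).
  assert (NP : / eps < INR N).
  { unfold N. rewrite S_INR.
    destruct (Z_le_gt_dec 0 (up (/ eps))).
    - rewrite INR_IZR_INZ, Z2Nat.id by auto. lra.
    - assert (IZR (up (/ eps)) < 0) by (apply IZR_lt; lia).
      pose proof (Rinv_0_lt_compat eps He). lra. }
  assert (Ninv : / INR N < eps).
  { pose proof (Rinv_0_lt_compat eps He).
    rewrite <- (Rinv_inv eps). apply Rinv_lt_contravar; [|lra].
    apply Rmult_lt_0_compat; lra. }
  destruct (dirichlet N ltac:(unfold N; lia)) as [i [j [Hij Hd]]].
  pose proof (a_bounds i); pose proof (a_bounds j).
  destruct (a_sub i j ltac:(lia)) as [[L E]|[L E]].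
  - exists (j - i)%nat. split; [lia|].
    pose proof (a_irr (j - i) ltac:(lia)). pose proof (a_bounds (j - i)).
    rewrite Rabs_pos_eq in Hd by lra. split; lra.
  - destruct (convert (j - i) ltac:(lia)) as [q [Hq Aq]].
    exists q. split; auto. pose proof (a_irr q Hq). pose proof (a_bounds q).
    rewrite Rabs_left in Hd by lra. split; lra.
Qed.

Fixpoint Ssum (f : nat -> R) (n : nat) : R :=
  match n with O => 0 | S n' => Ssum f n' + f n' end.

Lemma Ssum_ext f g n : (forall k, (k < n)%nat -> f k = g k) -> Ssum f n = Ssum g n.
Proof.
  induction n; intros H; simpl; auto.
  rewrite IHn, H; auto.
Qed.

Lemma Ssum_le f g n : (forall k, f k <= g k) -> Ssum f n <= Ssum g n.
Proof. intros H; induction n; simpl; [lra|]. specialize (H n). lra. Qed.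

Lemma Ssum_plus f g n : Ssum (fun k => f k + g k) n = Ssum f n + Ssum g n.
Proof. induction n; simpl; [ring|]. rewrite IHn; ring. Qed.

Lemma Ssum_scal c f n : Ssum (fun k => c * f k) n = c * Ssum f n.
Proof. induction n; simpl; [ring|]. rewrite IHn; ring. Qed.

Lemma Ssum_const c n : Ssum (fun _ => c) n = INR n * c.
Proof. induction n; [simpl; ring|].
  change (Ssum (fun _ => c) (S n)) with (Ssum (fun _ => c) n + c). rewrite IHn, S_INR; ring. Qed.

Lemma Ssum_split f n m : Ssum f (n + m) = Ssum f n + Ssum (fun k => f (n + k)%nat) m.
Proof.
  induction m; simpl.
  - rewrite Nat.add_0_r. ring.
  - rewrite Nat.add_succ_r. simpl. rewrite IHm. ring.
Qed.

Lemma Ssum_bounds f n : (forall k, 0 <= f k <= 1) -> 0 <= Ssum f n <= INR n.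
Proof.
  intros H. split.
  - rewrite <- (Rmult_0_r (INR n)), <- Ssum_const. apply Ssum_le. intro; apply H.
  - rewrite <- (Rmult_1_r (INR n)), <- Ssum_const. apply Ssum_le. intro; apply H.
Qed.

Lemma Ssum_shift f n m : (forall k, 0 <= f k <= 1) ->
  Ssum f n - INR m <= Ssum (fun k => f (k + m)%nat) n <= Ssum f n + INR m.
Proof.
  intros H.
  assert (E : Ssum (fun k => f (k + m)%nat) n =
              Ssum f n + Ssum (fun k => f (n + k)%nat) m - Ssum f m).
  { pose proof (Ssum_split f n m) as E1. pose proof (Ssum_split f m n) as E2.
    rewrite Nat.add_comm in E2.
    rewrite (Ssum_ext (fun k => f (k + m)%nat) (fun k => f (m + k)%nat)) by
      (intros; f_equal; lia). lra. }
  rewrite E.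
  pose proof (Ssum_bounds f m H).
  pose proof (Ssum_bounds (fun k => f (n + k)%nat) m (fun k => H _)).
  lra.
Qed.

Lemma core (n m d l y S E W S' : R) :
  0 < d -> 0 < l -> 1 <= y -> y <= 2 -> d * l <= y - 1 -> y - 1 <= y * d * l ->
  0 <= S -> 0 <= E -> E <= n * d + m -> n * d - m <= E -> E / 2 <= W -> W <= y * E / 2 ->
  y * S' = S + W -> S - m <= S' <= S + m -> 0 <= m ->
  n / (2 * y * l) - 3 * m / (d * l) <= S /\ S <= y * n / (2 * l) + 3 * m / (d * l).
Proof.
  intros Hd Hl Hy1 Hy2 Hl1 Hl2 HS HE HE1 HE2 HW1 HW2 HSS [HS1 HS2] Hm.
  assert (Hdl : 0 < d * l) by (apply Rmult_lt_0_compat; lra).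
  assert (Key : S * (y - 1) = W - y * (S' - S)) by (replace W with (y * S' - S) by lra; ring).
  split.
  - (* S * (y d l) >= S (y-1) >= E/2 - y m >= (n d - m)/2 - 2 m *)
    assert (A : (n * d - m) / 2 - 2 * m <= S * (y * d * l)).
    { assert (y * (S' - S) <= y * m) by (apply Rmult_le_compat_l; lra).
      assert (S * (y - 1) <= S * (y * d * l)) by (apply Rmult_le_compat_l; lra).
      assert (y * m <= 2 * m) by (apply Rmult_le_compat_r; lra).
      lra. }
    assert (Hydl : 0 < y * d * l) by (rewrite Rmult_assoc; apply Rmult_lt_0_compat; lra).
    apply (Rmult_le_reg_r (y * d * l)); auto.
    replace ((n / (2 * y * l) - 3 * m / (d * l)) * (y * d * l))
      with (n * d / 2 - 3 * m * y) by (field; lra).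
    assert (m <= m * y) by (rewrite <- (Rmult_1_r m) at 1; apply Rmult_le_compat_l; lra).
    lra.
  - assert (A : S * (d * l) <= y * (n * d + m) / 2 + y * m).
    { assert (- (y * m) <= y * (S' - S)) by
        (assert (y * - m <= y * (S' - S)) by (apply Rmult_le_compat_l; lra); lra).
      assert (S * (d * l) <= S * (y - 1)) by (apply Rmult_le_compat_l; lra).
      assert (y * E <= y * (n * d + m)) by (apply Rmult_le_compat_l; lra).
      lra. }
    apply (Rmult_le_reg_r (d * l)); auto.
    replace ((y * n / (2 * l) + 3 * m / (d * l)) * (d * l))
      with (y * n * d / 2 + 3 * m) by (field; lra).
    assert (y * m <= 2 * m) by (apply Rmult_le_compat_r; lra).
    lra.
Qed.

Definition v (k : nat) := Rpower 2 (- a k).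
Definition e (m k : nat) := a k + a m - a (k + m).

Lemma rp_mul x z : Rpower 2 x * Rpower 2 z = Rpower 2 (x + z).
Proof. rewrite Rpower_plus. ring. Qed.

Lemma rp2_le x z : x <= z -> Rpower 2 x <= Rpower 2 z.
Proof. intros; apply Rle_Rpower; lra. Qed.

Lemma v_bounds k : 0 <= v k <= 1.
Proof.
  unfold v. split.
  - unfold Rpower. left; apply exp_pos.
  - pose proof (a_bounds k). rewrite <- (Rpower_O 2) by lra. apply rp2_le. lra.
Qed.

Lemma perk m k :
  (e m k = 0 \/ e m k = 1) /\
  Rpower 2 (a m) * v (k + m) = v k + e m k * v k /\
  e m k / 2 <= e m k * v k <= e m k * Rpower 2 (a m) / 2.
Proof.
  unfold e, v. pose proof (a_bounds k). pose proof (a_bounds m).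
  destruct (a_add k m) as [[L E]|[L E]]; rewrite E.
  - replace (a k + a m - (a k + a m)) with 0 by ring.
    split; [auto|]. split.
    + rewrite rp_mul. replace (a m + - (a k + a m)) with (- a k) by ring. ring.
    + lra.
  - replace (a k + a m - (a k + a m - 1)) with 1 by ring.
    split; [auto|]. split.
    + rewrite rp_mul. replace (a m + - (a k + a m - 1)) with (- a k + 1) by ring.
      rewrite Rpower_plus, Rpower_1 by lra. ring.
    + rewrite !Rmult_1_l. split.
      * replace (1 / 2) with (Rpower 2 (- (1))).
        { apply rp2_le. lra. }
        rewrite Rpower_Ropp, Rpower_1 by lra. field.
      * replace (Rpower 2 (a m) / 2) with (Rpower 2 (a m + - (1))).
        { apply rp2_le. lra. }
        rewrite Rpower_plus, Rpower_Ropp, Rpower_1 by lra. field.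
Qed.

Lemma ln2_lt1 : ln 2 < 1.
Proof.
  rewrite <- ln_exp with 1. apply ln_increasing; [lra|].
  pose proof (exp_ineq1 1 ltac:(lra)). lra.
Qed.

Lemma main_bound m n : (1 <= m)%nat ->
  let d := a m in let y := Rpower 2 d in
  INR n / (2 * y * ln 2) - 3 * INR m / (d * ln 2) <= Ssum v n /\
  Ssum v n <= y * INR n / (2 * ln 2) + 3 * INR m / (d * ln 2).
Proof.
  intros Hm d y.
  pose proof (a_irr m Hm). pose proof (a_bounds m). pose proof ln2_pos.
  assert (Hd : 0 < d) by (unfold d; lra).
  assert (Ey : y = exp (d * ln 2)) by reflexivity.
  assert (Y1 : 1 + d * ln 2 <= y) by (rewrite Ey; apply exp_ineq1_le).
  assert (Y2 : y - 1 <= y * d * ln 2).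
  { assert (1 + - (d * ln 2) <= / y).
    { rewrite Ey, <- exp_Ropp. apply exp_ineq1_le. }
    assert (0 < y) by (rewrite Ey; apply exp_pos).
    assert (y * (1 + - (d * ln 2)) <= y * / y) by (apply Rmult_le_compat_l; lra).
    rewrite Rinv_r in H4 by lra. lra. }
  assert (Y3 : y <= 2).
  { unfold y. rewrite <- (Rpower_1 2) at 2 by lra. apply rp2_le. unfold d; lra. }
  assert (Eq : Ssum (e m) n = INR n * d + Ssum a n - Ssum (fun k => a (k + m)%nat) n).
  { rewrite (Ssum_ext (e m) (fun k => a k + (d + (-1) * a (k + m)%nat))) by
      (intros; unfold e, d; ring).
    rewrite !Ssum_plus, Ssum_const, Ssum_scal. ring. }
  assert (Ab : forall k, 0 <= a k <= 1) by (intro k; pose proof (a_bounds k); lra).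
  pose proof (Ssum_shift a n m Ab) as Sa.
  pose proof (Ssum_shift v n m v_bounds) as Sv.
  apply (core (INR n) (INR m) d (ln 2) y (Ssum v n) (Ssum (e m) n)
                (Ssum (fun k => e m k * v k) n) (Ssum (fun k => v (k + m)%nat) n)); auto; try lra.
  all: try lra.
  - assert (0 < d * ln 2) by (apply Rmult_lt_0_compat; lra). lra.
  - apply Ssum_bounds. apply v_bounds.
  - rewrite <- (Rmult_0_r (INR n)), <- Ssum_const. apply Ssum_le.
    intro k. destruct (perk m k) as [[-> | ->] _]; lra.
  - unfold Rdiv. rewrite Rmult_comm, <- Ssum_scal. apply Ssum_le.
    intro k. destruct (perk m k) as [_ [_ [B _]]]. lra.
  - replace (y * Ssum (e m) n / 2) with (Ssum (fun k => e m k * y / 2) n).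
    + apply Ssum_le. intro k. destruct (perk m k) as [_ [_ [_ B]]]. exact B.
    + rewrite (Ssum_ext _ (fun k => (y / 2) * e m k)) by (intros; field).
      rewrite Ssum_scal. field.
  - rewrite <- Ssum_scal, <- Ssum_plus. apply Ssum_ext. intros k _.
    destruct (perk m k) as [_ [B _]]. exact B.
Qed.


Lemma exp_div x z : exp x / exp z = exp (x - z).
Proof. unfold Rminus, Rdiv. rewrite exp_plus, exp_Ropp. reflexivity. Qed.

Lemma t_v k : t (S k) = v k / 3.
Proof.
  pose proof ln2_pos; pose proof ln3_gt.
  unfold t, Rfloor_Z.
  replace ((INR (S k) - 1) / alpha) with (INR k * beta)
    by (rewrite S_INR; unfold alpha, beta; field; lra).
  rewrite powerRZ_Rpower by lra.
  rewrite <- (Rpower_pow (S k) 3) by lra.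
  unfold v, a, fr, Rpower.
  match goal with |- _ = exp ?X / 3 =>
    replace (exp X / 3) with (exp X / exp (ln 3)) by (rewrite exp_ln; lra) end.
  rewrite !exp_div. f_equal. rewrite S_INR. unfold beta. field. lra.
Qed.

Lemma sum_t n : sum_n_m t 1 n = Ssum (fun k => t (S k)) n.
Proof.
  induction n.
  - rewrite sum_n_m_zero by lia. reflexivity.
  - rewrite sum_n_Sm by lia. rewrite IHn. reflexivity.
Qed.

Lemma cesaro_eq n : cesaro_t n = / INR n * Ssum v n / 3.
Proof.
  unfold cesaro_t. rewrite sum_t.
  rewrite (Ssum_ext _ (fun k => / 3 * v k)) by (intros; cbv beta; rewrite t_v; unfold Rdiv; ring).
  rewrite Ssum_scal. unfold Rdiv; ring.
Qed.

Lemma integral_val :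
  / alpha * RInt (fun x => Rpower 3 (- x)) 1 (1 + alpha) = 1 / (6 * ln 2).
Proof.
  pose proof ln2_pos; pose proof ln3_gt.
  assert (HI : is_RInt (fun x => Rpower 3 (- x)) 1 (1 + alpha)
     (minus ((fun x => - Rpower 3 (- x) / ln 3) (1 + alpha)) ((fun x => - Rpower 3 (- x) / ln 3) 1))).
  { apply (is_RInt_derive (fun x => - Rpower 3 (- x) / ln 3)).
    - intros x _. unfold Rpower. auto_derive; auto. field. lra.
    - intros x _. apply (ex_derive_continuous (fun x => Rpower 3 (- x))). unfold Rpower. auto_derive. auto. }
  rewrite (is_RInt_unique _ _ _ _ HI).
  unfold minus, plus, opp; simpl.
  assert (E1 : Rpower 3 (- (1 + alpha)) = / 6).
  { rewrite Ropp_plus_distr, Rpower_plus, !Rpower_Ropp, Rpower_1 by lra.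
    unfold Rpower, alpha. replace (ln 2 / ln 3 * ln 3) with (ln 2) by (field; lra).
    rewrite exp_ln by lra. field. }
  assert (E2 : Rpower 3 (- (1)) = / 3).
  { rewrite Rpower_Ropp, Rpower_1 by lra. reflexivity. }
  rewrite E1, E2. unfold alpha. field. lra.
Qed.

Lemma limit_main : is_lim_seq cesaro_t (1 / (6 * ln 2)).
Proof.
  pose proof ln2_pos as Hl. pose proof ln2_lt1 as Hl1.
  apply is_lim_seq_spec. intros eps. simpl.
  destruct eps as [eps Heps]; simpl.
  set (e3 := 3 * eps).
  assert (He3 : 0 < e3) by (unfold e3; lra).
  set (th := e3 / (1 + e3)).
  assert (Hth : 0 < th) by (unfold th; apply Rdiv_lt_0_compat; lra).
  destruct (small th Hth) as [m [Hm [Hd0 Hdth]]].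
  set (d := a m) in *. set (y := Rpower 2 d).
  assert (Hdl : 0 < d * ln 2) by (apply Rmult_lt_0_compat; lra).
  assert (Ey : y = exp (d * ln 2)) by reflexivity.
  assert (Y1 : 1 + d * ln 2 <= y) by (rewrite Ey; apply exp_ineq1_le).
  assert (Ypos : 0 < y) by (rewrite Ey; apply exp_pos).
  assert (Yinv : 1 - d * ln 2 <= / y).
  { rewrite Ey, <- exp_Ropp. pose proof (exp_ineq1_le (- (d * ln 2))). lra. }
  assert (Hthd : d * (1 + e3) < e3).
  { unfold th in Hdth. apply (Rmult_lt_compat_r (1 + e3)) in Hdth; [|lra].
    unfold Rdiv in Hdth. rewrite Rmult_assoc, Rinv_l, Rmult_1_r in Hdth by lra. exact Hdth. }
  assert (Hdlt : d < e3).
  { assert (d <= d * (1 + e3)) by (rewrite <- (Rmult_1_r d) at 1; apply Rmult_le_compat_l; lra). lra. }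
  assert (Yup : y <= 1 + e3 * ln 2).
  { assert (Hc : d * ln 2 * (1 + e3 * ln 2) < e3 * ln 2).
    { assert (d * (1 + e3 * ln 2) <= d * (1 + e3)).
      { apply Rmult_le_compat_l; [lra|]. assert (e3 * ln 2 <= e3 * 1) by (apply Rmult_le_compat_l; lra). lra. }
      replace (d * ln 2 * (1 + e3 * ln 2)) with (d * (1 + e3 * ln 2) * ln 2) by ring.
      apply Rmult_lt_compat_r; lra. }
    assert (Hyd : y * (1 - d * ln 2) <= 1).
    { apply (Rmult_le_compat_l y) in Yinv; [|lra]. rewrite Rinv_r in Yinv by lra. exact Yinv. }
    assert (Hpos : 0 < 1 - d * ln 2).
    { assert (d * ln 2 * (1 + e3 * ln 2) >= d * ln 2).
      { rewrite <- (Rmult_1_r (d * ln 2)) at 2. apply Rle_ge, Rmult_le_compat_l; [lra|].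
        assert (0 <= e3 * ln 2) by (apply Rmult_le_pos; lra). lra. }
      assert (e3 * ln 2 * (1 - d * ln 2) > 0 \/ True) by auto.
      nra. }
    nra. }
  set (K := 3 * INR m / (d * ln 2)).
  assert (Kpos : 0 <= K).
  { unfold K. apply Rmult_le_pos; [pose proof (pos_INR m); lra|].
    left; apply Rinv_0_lt_compat; lra. }
  destruct (archimed (2 * K / e3)) as [A1 _].
  exists (S (Z.to_nat (up (2 * K / e3)))).
  intros n Hn.
  assert (Hn1 : (1 <= n)%nat) by lia.
  assert (Hnp : 0 < INR n) by (apply lt_0_INR; lia).
  assert (HnK : 2 * K / e3 < INR n).
  { apply le_INR in Hn. rewrite S_INR in Hn.
    destruct (Z_le_gt_dec 0 (up (2 * K / e3))).
    - rewrite INR_IZR_INZ, Z2Nat.id in Hn by auto. lra.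
    - assert (IZR (up (2 * K / e3)) < 0) by (apply IZR_lt; lia).
      assert (0 <= 2 * K / e3) by (apply Rmult_le_pos; [lra|left; apply Rinv_0_lt_compat; lra]).
      lra. }
  assert (KN : K / INR n < e3 / 2).
  { apply (Rmult_lt_reg_r (INR n)); auto. unfold Rdiv at 1.
    rewrite Rmult_assoc, Rinv_l, Rmult_1_r by lra.
    apply (Rmult_lt_compat_l (e3 / 2)) in HnK; [|lra].
    replace (e3 / 2 * (2 * K / e3)) with K in HnK by (field; lra). lra. }
  destruct (main_bound m n Hm) as [Lo Up]. fold d y K in Lo, Up.
  rewrite cesaro_eq.
  set (s := Ssum v n) in *.
  assert (Slo : / y * / (2 * ln 2) - K / INR n <= / INR n * s).
  { apply (Rmult_le_compat_r (/ INR n)) in Lo; [|left; apply Rinv_0_lt_compat; lra].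
    replace ((INR n / (2 * y * ln 2) - K) * / INR n) with (/ y * / (2 * ln 2) - K / INR n) in Lo
      by (field; repeat split; lra).
    lra. }
  assert (Sup : / INR n * s <= y * / (2 * ln 2) + K / INR n).
  { apply (Rmult_le_compat_r (/ INR n)) in Up; [|left; apply Rinv_0_lt_compat; lra].
    replace ((y * INR n / (2 * ln 2) + K) * / INR n) with (y * / (2 * ln 2) + K / INR n) in Up
      by (field; repeat split; lra).
    lra. }
  assert (I2 : 0 < / (2 * ln 2)) by (apply Rinv_0_lt_compat; lra).
  assert (T1 : y * / (2 * ln 2) <= / (2 * ln 2) + e3 / 2).
  { apply (Rmult_le_compat_r (/ (2 * ln 2))) in Yup; [|lra].
    replace ((1 + e3 * ln 2) * / (2 * ln 2)) with (/ (2 * ln 2) + e3 / 2) in Yup by (field; lra).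
    exact Yup. }
  assert (T2 : / (2 * ln 2) - e3 / 2 <= / y * / (2 * ln 2)).
  { assert (1 - e3 * ln 2 <= / y).
    { assert (d * ln 2 <= e3 * ln 2) by (apply Rmult_le_compat_r; lra). lra. }
    apply (Rmult_le_compat_r (/ (2 * ln 2))) in H; [|lra].
    replace ((1 - e3 * ln 2) * / (2 * ln 2)) with (/ (2 * ln 2) - e3 / 2) in H by (field; lra).
    exact H. }
  replace (1 / (6 * ln 2)) with (/ (2 * ln 2) / 3) by (field; lra).
  replace (/ INR n * s / 3 - / (2 * ln 2) / 3) with ((/ INR n * s - / (2 * ln 2)) / 3) by (unfold Rdiv; ring).
  unfold Rdiv at 1. rewrite Rabs_mult, (Rabs_pos_eq (/ 3)) by lra.
  apply (Rmult_lt_reg_r 3); [lra|]. rewrite Rmult_assoc, Rinv_l, Rmult_1_r by lra.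
  apply Rabs_def1; unfold e3 in *; lra.
Qed.

Theorem lemma41 :
  is_lim_seq cesaro_t (/ alpha * RInt (fun x => Rpower 3 (- x)) 1 (1 + alpha))
  /\ / alpha * RInt (fun x => Rpower 3 (- x)) 1 (1 + alpha) = 1 / (6 * ln 2).
Proof.
  rewrite integral_val. split; [apply limit_main | reflexivity].
Qed.
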